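(* Let $\mathbb F$ be an algebraically closed field and $\lambda\in\overline{\mathbb F}$. (1) If $C(s)\in\mathbb F[s]^{p_1\times q_1}$, $D(s)\in\mathbb F[s]^{p_2\times q_2}$ are pencils and $A(s)=\begin{bmatrix}C(s)&0\\0&D(s)\end{bmatrix}$, then $\dim\mathcal L^i_\lambda(A(s))=\dim\mathcal L^i_\lambda(C(s))+\dim\mathcal L^i_\lambda(D(s))$ for all $i\ge0$. (2) If $C(s)\in\mathbb F[s]^{p\times q_1}$ and $A(s)=\begin{bmatrix}C(s)&0\end{bmatrix}\in\mathbb F[s]^{p\times(q_1+q_2)}$, then $\dim\mathcal L^i_\lambda(A(s))=\dim\mathcal L^i_\lambda(C(s))+q_2$ for all $i\ge1$. (3) If $C(s)\in\mathbb F[s]^{p_1\times q}$ and $A(s)=\begin{bmatrix}C(s)\\0\end{bmatrix}\in\mathbb F[s]^{(p_1+p_2)\times q}$, then $\dim\mathcal L^i_\lambda(A(s))=\dim\mathcal L^i_\lambda(C(s))$ for all $i\ge0$.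
   Context: A pencil is $A(s)=A_0+sA_1$ with constant matrices $A_0,A_1$; $A(\infty):=A_1$, $\overline{\mathbb F}=\mathbb F\cup\{\infty\}$. A Jordan chain at $\lambda$ of length $k+1$ is $(x_k,\dots,x_0)$ of column vectors (of size the number of columns), $x_0\ne0$, with $A(\lambda)x_0=0$, $A(\lambda)x_i=-A_1x_{i-1}$ ($1\le i\le k$) if $\lambda\in\mathbb F$, and $A_1x_0=0$, $A_1x_i=-A_0x_{i-1}$ if $\lambda=\infty$. $\mathcal L^\ell_\lambda(A(s))$ ($\ell\ge1$) is the span of the vectors of all Jordan chains at $\lambda$ of length $\le\ell$ (and $\{0\}$ if there are none), $\mathcal L^0_\lambda(A(s))=\{0\}$. *)

(* Defs.v *)
From HB Require Import structures.
From mathcomp Require Import all_boot all_order all_algebra.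
From Stdlib Require Import ClassicalEpsilon.
Set Implicit Arguments. Unset Strict Implicit. Unset Printing Implicit Defensive.
Import Order.TTheory GRing.Theory Num.Theory.
Local Open Scope ring_scope.

(* A pencil A(s) = A0 + s A1 is represented by its two coefficient matrices
   A0 A1 : 'M[F]_(m, n).  A point of F-bar = F ∪ {∞} is an [option F]:
   [Some a] is a in F and [None] is ∞. *)

(* x : nat -> 'cV_n, with x i for 0 <= i <= k, is a Jordan chain
   (x_k, ..., x_0) of length k+1 at lam. *)
Definition jordan_chain (F : fieldType) (m n : nat) (A0 A1 : 'M[F]_(m, n))
    (lam : option F) (k : nat) (x : nat -> 'cV[F]_n) : Prop :=
  x 0%N != 0 /\
  match lam with
  | Some a =>
      (A0 + a *: A1) *m x 0%N = 0 /\
      (forall i, (1 <= i <= k)%N -> (A0 + a *: A1) *m x i = - (A1 *m x i.-1))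
  | None =>
      A1 *m x 0%N = 0 /\
      (forall i, (1 <= i <= k)%N -> A1 *m x i = - (A0 *m x i.-1))
  end.

(* v is one of the vectors of some Jordan chain at lam of length <= l
   (length k+1 <= l, i.e. k < l). For l = 0 there are none. *)
Definition chain_vector (F : fieldType) (m n : nat) (A0 A1 : 'M[F]_(m, n))
    (lam : option F) (l : nat) (v : 'cV[F]_n) : Prop :=
  exists k x i, (k < l)%N /\ jordan_chain A0 A1 lam k x /\ (i <= k)%N /\ v = x i.

Definition in_span (F : fieldType) (n : nat) (S : 'cV[F]_n -> Prop)
    (v : 'cV[F]_n) : Prop :=
  exists (k : nat) (vs : 'I_k -> 'cV[F]_n) (c : 'I_k -> F),
    (forall j, S (vs j)) /\ v = \sum_(j < k) c j *: vs j.

Definition represents_L (F : fieldType) (m n : nat) (A0 A1 : 'M[F]_(m, n))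
    (lam : option F) (l : nat) (M : 'M[F]_n) : Prop :=
  forall v : 'cV[F]_n, (v^T <= M)%MS <-> in_span (chain_vector A0 A1 lam l) v.

(* A matrix representing L^l_lam(A) (chosen by classical choice; one exists
   since every subspace of F^n is a row space). *)
Definition L_mx (F : fieldType) (m n : nat) (A0 A1 : 'M[F]_(m, n))
    (lam : option F) (l : nat) : 'M[F]_n :=
  epsilon (inhabits 0) (represents_L A0 A1 lam l).

Definition dimL (F : fieldType) (m n : nat) (A0 A1 : 'M[F]_(m, n))
    (lam : option F) (l : nat) : nat :=
  \rank (L_mx A0 A1 lam l).

(* Main.v *)
Require Import Defs.
From HB Require Import structures.
From mathcomp Require Import all_boot all_order all_algebra.
From Stdlib Require Import Classical ClassicalEpsilon.
From mathcomp Require Import zify.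
Set Implicit Arguments. Unset Strict Implicit. Unset Printing Implicit Defensive.
Import GRing.Theory.
Local Open Scope ring_scope.

Section Gen.
Variable F : fieldType.

Lemma span_sub n (S : 'cV[F]_n -> Prop) v : S v -> in_span S v.
Proof.
move=> Sv; exists 1%N, (fun _ => v), (fun _ => 1); split => //.
by rewrite big_ord1 scale1r.
Qed.

Lemma span_add n (S : 'cV[F]_n -> Prop) v w :
  in_span S v -> in_span S w -> in_span S (v + w).
Proof.
case=> k1 [vs1 [c1 [H1 ->]]]; case=> k2 [vs2 [c2 [H2 ->]]].
exists (k1 + k2)%N, (fun j => match split j with inl a => vs1 a | inr b => vs2 b end),
  (fun j => match split j with inl a => c1 a | inr b => c2 b end).
split; first by move=> j; case: (split j).
rewrite big_split_ord /=; congr (_ + _); apply: eq_bigr => j _.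
  by rewrite (unsplitK (inl _ j)).
by rewrite (unsplitK (inr _ j)).
Qed.

Lemma span_scale n (S : 'cV[F]_n -> Prop) a v :
  in_span S v -> in_span S (a *: v).
Proof.
case=> k [vs [c [H ->]]]; exists k, vs, (fun j => a * c j); split => //.
by rewrite scaler_sumr; apply: eq_bigr => j _; rewrite scalerA.
Qed.

Lemma rep_step n (S : 'cV[F]_n -> Prop) (M : 'M[F]_n) v :
  (forall u, (u^T <= M)%MS -> in_span S u) -> in_span S v -> ~ (v^T <= M)%MS ->
  (forall u, (u^T <= (M + v^T)%MS)%MS -> in_span S u) /\
  (\rank M < \rank (M + v^T)%MS)%N.
Proof.
move=> HM Hv Hn; split.
  move=> u /sub_addsmxP [[a b] /= Hu].
  have -> : u = (a *m M)^T + (b *m v^T)^T by rewrite -linearD /= -Hu trmxK.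
  apply: span_add; first by apply: HM; rewrite trmxK submxMl.
  rewrite trmx_mul trmxK.
  have -> : v *m b^T = (b^T 0 0) *: v.
    apply/matrixP => i j; rewrite !mxE big_ord1 !mxE mulrC (ord1 j).
    by [].
  exact: span_scale.
have : (M < M + v^T)%MS.
  rewrite ltmxE addsmxSl /=; apply/negP => H; apply: Hn.
  exact: submx_trans (addsmxSr _ _) H.
by rewrite ltmxErank => /andP [].
Qed.

Lemma rep_ex n (S : 'cV[F]_n -> Prop) :
  exists M : 'M[F]_n, forall v, (v^T <= M)%MS <-> in_span S v.
Proof.
suff H : forall d (M : 'M[F]_n), (forall v, (v^T <= M)%MS -> in_span S v) ->
   (n - \rank M <= d)%N -> exists M : 'M[F]_n, forall v, (v^T <= M)%MS <-> in_span S v.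
  apply: (H n 0) => [v|]; last by rewrite leq_subr.
  rewrite submx0 => /eqP /(f_equal trmx); rewrite trmxK trmx0 => ->.
  by exists 0%N, (fun _ => 0), (fun _ => 0); split => [[]|]; rewrite ?big_ord0.
elim=> [|d IH] M HM Hd;
  (case: (classic (exists v, in_span S v /\ ~ (v^T <= M)%MS)) => [[v [Hv Hn]]|Hno];
   [|exists M => v; split; [exact: HM| move=> Hv; apply: NNPP => Hc; apply: Hno; by exists v]]);
  have [HM' Hlt] := rep_step HM Hv Hn; have := rank_leq_col (M + v^T)%MS.
- by move=> Hr; exfalso; move: Hd Hlt Hr; lia.
- by move=> Hr; apply: (IH _ HM'); move: Hd Hlt Hr; lia.
Qed.

Lemma span_map n n' (S : 'cV[F]_n -> Prop) (S' : 'cV[F]_n' -> Prop)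
  (T : 'M[F]_(n', n)) v :
  in_span S v -> (forall u, S u -> in_span S' (T *m u)) -> in_span S' (T *m v).
Proof.
case: (rep_ex S') => M HM; case=> k [vs [c [HS ->]]] H.
apply/HM; rewrite mulmx_sumr linear_sum /=; apply: summx_sub => j _.
by rewrite -scalemxAr linearZ /=; apply: scalemx_sub; apply/HM/H.
Qed.

Lemma span_sub_mx n r (S : 'cV[F]_n -> Prop) (M : 'M[F]_(r, n)) v :
  in_span S v -> (forall u, S u -> (u^T <= M)%MS) -> (v^T <= M)%MS.
Proof.
case=> k [vs [c [HS ->]]] H.
rewrite linear_sum /=; apply: summx_sub => j _.
by rewrite linearZ /=; apply: scalemx_sub; apply/H.
Qed.

Lemma same_rank n (S : 'cV[F]_n -> Prop) r1 r2 (M1 : 'M[F]_(r1, n)) (M2 : 'M[F]_(r2, n)) :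
  (forall v, (v^T <= M1)%MS <-> S v) -> (forall v, (v^T <= M2)%MS <-> S v) ->
  \rank M1 = \rank M2.
Proof.
move=> H1 H2; apply: eqmx_rank; apply/andP; split; apply/row_subP => i.
  by rewrite -(trmxK (row i M1)); apply/H2/H1; rewrite trmxK row_sub.
by rewrite -(trmxK (row i M2)); apply/H1/H2; rewrite trmxK row_sub.
Qed.

End Gen.

Section Chains.
Variable F : fieldType.

Definition gceq m n (P Q : 'M[F]_(m, n)) (k : nat) (x : nat -> 'cV[F]_n) : Prop :=
  P *m x 0%N = 0 /\
  (forall i, (1 <= i <= k)%N -> P *m x i = - (Q *m x i.-1)).

Definition cv m n (P Q : 'M[F]_(m, n)) (l : nat) (v : 'cV[F]_n) : Prop :=
  exists k x i, (k < l)%N /\ (x 0%N != 0 /\ gceq P Q k x) /\ (i <= k)%N /\ v = x i.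

Definition PP m n (A0 A1 : 'M[F]_(m, n)) (lam : option F) :=
  match lam with Some a => A0 + a *: A1 | None => A1 end.
Definition QQ m n (A0 A1 : 'M[F]_(m, n)) (lam : option F) :=
  match lam with Some a => A1 | None => A0 end.

Lemma chain_cv m n (A0 A1 : 'M[F]_(m, n)) lam l v :
  chain_vector A0 A1 lam l v <-> cv (PP A0 A1 lam) (QQ A0 A1 lam) l v.
Proof. by case: lam => [a|]; exact: iff_refl. Qed.

Lemma span0 n (S : 'cV[F]_n -> Prop) : in_span S 0.
Proof. by exists 0%N, (fun _ => 0), (fun _ => 0); split => [[]|]; rewrite ?big_ord0. Qed.

Lemma span_ext n (S S' : 'cV[F]_n -> Prop) v :
  (forall u, S u <-> S' u) -> in_span S v <-> in_span S' v.
Proof.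
move=> H; split; case=> k [vs [c [HS ->]]]; exists k, vs, c; split => // j; exact/H.
Qed.

Lemma ceq_span m n (P Q : 'M[F]_(m, n)) l k x i :
  gceq P Q k x -> (k < l)%N -> (i <= k)%N -> in_span (cv P Q l) (x i).
Proof.
move=> [H0 HS] Hkl Hik.
case Hx: (x i == 0); first by rewrite (eqP Hx); exact: span0.
have ex : exists j, (x j != 0) && (j <= i)%N by exists i; rewrite Hx leqnn.
case: (ex_minnP ex) => j /andP [Hj Hji] Hmin.
have Hz : forall t, (t < j)%N -> x t = 0.
  move=> t Ht; have Ht2 := Ht; apply/eqP; apply: contraTT Ht => Hn; rewrite -leqNgt; apply: Hmin.
  by rewrite Hn /=; move: Ht2 Hji; lia.
apply: span_sub; exists (k - j)%N, (fun t => x (t + j)%N), (i - j)%N.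
split; first by lia.
split; last by split; [lia| rewrite subnK].
split; first by rewrite add0n.
split.
  rewrite add0n; case: j Hj Hji Hmin Hz => [|j] Hj Hji Hmin Hz; first exact: H0.
  rewrite HS; last by move: Hji Hik; lia.
  by rewrite /= Hz // mulmx0 oppr0.
move=> t Ht; rewrite HS; last by move: Ht Hji Hik; lia.
by congr (- (Q *m x _)); move: Ht; case: t => [|t] //= _; rewrite addSn.
Qed.

Lemma gceq_map m n m' n' (P Q : 'M[F]_(m, n)) (P' Q' : 'M[F]_(m', n'))
   (T : 'M[F]_(n', n)) (S : 'M[F]_(m', m)) k x :
  P' *m T = S *m P -> Q' *m T = S *m Q -> gceq P Q k x ->
  gceq P' Q' k (fun t => T *m x t).
Proof.
move=> EP EQ [H0 HS]; split; first by rewrite mulmxA EP -mulmxA H0 mulmx0.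
move=> i Hi; rewrite mulmxA EP -mulmxA HS // mulmxN !mulmxA EQ.
by [].
Qed.

Lemma cv_map m n m' n' (P Q : 'M[F]_(m, n)) (P' Q' : 'M[F]_(m', n'))
   (T : 'M[F]_(n', n)) (S : 'M[F]_(m', m)) l v :
  P' *m T = S *m P -> Q' *m T = S *m Q -> (forall u : 'cV[F]_n, T *m u = 0 -> u = 0) ->
  cv P Q l v -> cv P' Q' l (T *m v).
Proof.
move=> EP EQ Tinj [k [x [i [Hkl [[Hx0 Hc] [Hik ->]]]]]].
exists k, (fun t => T *m x t), i; split => //; split => //; split.
  by apply: contra Hx0 => /eqP /Tinj ->.
exact: gceq_map EP EQ Hc.
Qed.

Lemma dim_rep m n (A0 A1 : 'M[F]_(m, n)) lam l r (M : 'M[F]_(r, n)) :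
  (forall v, (v^T <= M)%MS <-> in_span (cv (PP A0 A1 lam) (QQ A0 A1 lam) l) v) ->
  dimL A0 A1 lam l = \rank M.
Proof.
move=> HM.
have HL : represents_L A0 A1 lam l (L_mx A0 A1 lam l).
  rewrite /L_mx; apply: epsilon_spec.
  by case: (rep_ex (chain_vector A0 A1 lam l)) => M0 H; exists M0.
apply: (same_rank (S := in_span (cv (PP A0 A1 lam) (QQ A0 A1 lam) l))) => // v.
rewrite HL; apply: span_ext => u; exact: chain_cv.
Qed.

End Chains.

Section Main.
Variable F : fieldType.

Lemma L_rep m n (A0 A1 : 'M[F]_(m, n)) lam l v :
  (v^T <= L_mx A0 A1 lam l)%MS <-> in_span (cv (PP A0 A1 lam) (QQ A0 A1 lam) l) v.
Proof.
have HL : represents_L A0 A1 lam l (L_mx A0 A1 lam l).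
  rewrite /L_mx; apply: epsilon_spec.
  by case: (rep_ex (chain_vector A0 A1 lam l)) => M0 H; exists M0.
rewrite HL; apply: span_ext => u; exact: chain_cv.
Qed.

Lemma sub_L m n (A0 A1 : 'M[F]_(m, n)) lam l r (X : 'M[F]_(r, n)) :
  (forall i, in_span (cv (PP A0 A1 lam) (QQ A0 A1 lam) l) (row i X)^T) ->
  (X <= L_mx A0 A1 lam l)%MS.
Proof.
move=> H; apply/row_subP => i; rewrite -(trmxK (row i X)); exact/L_rep/H.
Qed.

Lemma rowmapT m n n' (A0 A1 : 'M[F]_(m, n)) lam l r (X : 'M[F]_(r, n')) (T : 'M[F]_(n, n')) :
  (forall i, in_span (cv (PP A0 A1 lam) (QQ A0 A1 lam) l) (T *m (row i X)^T)) ->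
  (X *m T^T <= L_mx A0 A1 lam l)%MS.
Proof.
move=> H; apply: sub_L => i; rewrite row_mul trmx_mul trmxK; exact: H.
Qed.

Lemma dim_by_sub m n (A0 A1 : 'M[F]_(m, n)) lam l r (N : 'M[F]_(r, n)) :
  (N <= L_mx A0 A1 lam l)%MS ->
  (forall v, cv (PP A0 A1 lam) (QQ A0 A1 lam) l v -> (v^T <= N)%MS) ->
  dimL A0 A1 lam l = \rank N.
Proof.
move=> H1 H2; rewrite /dimL; apply: eqmx_rank; rewrite H1 andbT.
apply/row_subP => i; rewrite -(trmxK (row i _)).
apply: span_sub_mx H2; apply/L_rep; rewrite trmxK row_sub //.
Qed.

Lemma blk_sub q1 q2 r1 r2 (M1 : 'M[F]_(r1, q1)) (M2 : 'M[F]_(r2, q2)) (v : 'cV[F]_(q1 + q2)) :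
  ((row_mx 1%:M 0 *m v)^T <= M1)%MS -> ((row_mx 0 1%:M *m v)^T <= M2)%MS ->
  (v^T <= block_mx M1 0 0 M2)%MS.
Proof.
rewrite -(vsubmxK v) !mul_row_col !mul1mx !mul0mx addr0 add0r tr_col_mx.
move=> /submxP [w1 ->] /submxP [w2 ->].
have -> : row_mx (w1 *m M1) (w2 *m M2) = row_mx w1 w2 *m block_mx M1 0 0 M2.
  by rewrite mul_row_block !mulmx0 addr0 add0r.
exact: submxMl.
Qed.

Lemma colinj q1 q2 (u : 'cV[F]_q1) : col_mx 1%:M (0 : 'M_(q2, q1)) *m u = 0 -> u = 0.
Proof. by rewrite mul_col_mx mul1mx mul0mx => /eqP; rewrite col_mx_eq0 => /andP [/eqP]. Qed.
Lemma colinj2 q1 q2 (u : 'cV[F]_q2) : col_mx (0 : 'M_(q1, q2)) 1%:M *m u = 0 -> u = 0.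
Proof. by rewrite mul_col_mx mul1mx mul0mx => /eqP; rewrite col_mx_eq0 => /andP [_ /eqP]. Qed.

End Main.

Ltac msimp := rewrite ?(mul_block_col, mul_row_block, mul_col_mx, mul_mx_row, mul_row_col,
   mulmx1, mul1mx, mul0mx, mulmx0, addr0, add0r).

Lemma part1 (F : fieldType) (lam : option F) (p1 q1 p2 q2 : nat) (C0 C1 : 'M[F]_(p1, q1)) (D0 D1 : 'M[F]_(p2, q2))
          (i : nat) :
      dimL (block_mx C0 0 0 D0) (block_mx C1 0 0 D1) lam i
      = (dimL C0 C1 lam i + dimL D0 D1 lam i)%N.
Proof.
have EP : PP (block_mx C0 0 0 D0) (block_mx C1 0 0 D1) lam
   = block_mx (PP C0 C1 lam) 0 0 (PP D0 D1 lam).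
  by case: (lam) => [a|] //=; rewrite scale_block_mx add_block_mx !scaler0 !addr0.
have EQ : QQ (block_mx C0 0 0 D0) (block_mx C1 0 0 D1) lam
   = block_mx (QQ C0 C1 lam) 0 0 (QQ D0 D1 lam) by case: (lam).
rewrite (dim_by_sub (N := block_mx (L_mx C0 C1 lam i) 0 0 (L_mx D0 D1 lam i))).
- by rewrite rank_diag_block_mx.
- rewrite block_mxEv col_mx_sub; apply/andP; split.
  + have -> : row_mx (L_mx C0 C1 lam i) (0 : 'M_(q1, q2))
       = L_mx C0 C1 lam i *m (col_mx 1%:M (0 : 'M_(q2, q1)))^T.
      by rewrite tr_col_mx trmx1 trmx0 mul_mx_row mulmx1 mulmx0.
    apply: rowmapT => j; apply: span_map; first by apply/L_rep; rewrite trmxK; exact: row_sub.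
    move=> u Hu; apply: span_sub; rewrite EP EQ.
    apply: (cv_map (S := col_mx 1%:M 0)) Hu; [by msimp | by msimp | exact: colinj].
  + have -> : row_mx (0 : 'M_(q2, q1)) (L_mx D0 D1 lam i)
       = L_mx D0 D1 lam i *m (col_mx (0 : 'M_(q1, q2)) 1%:M)^T.
      by rewrite tr_col_mx trmx1 trmx0 mul_mx_row mulmx1 mulmx0.
    apply: rowmapT => j; apply: span_map; first by apply/L_rep; rewrite trmxK; exact: row_sub.
    move=> u Hu; apply: span_sub; rewrite EP EQ.
    apply: (cv_map (S := col_mx 0 1%:M)) Hu; [by msimp | by msimp | exact: colinj2].
- move=> v [k [x [j [Hkl [[_ Hc] [Hjk ->]]]]]]; rewrite EP EQ in Hc.
  apply: blk_sub; apply/L_rep.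
  + have Hg : gceq (PP C0 C1 lam) (QQ C0 C1 lam) k
       (fun t => row_mx (1%:M : 'M_q1) (0 : 'M_(q1, q2)) *m x t).
      by apply: (gceq_map (S := row_mx 1%:M 0)) Hc; msimp.
    exact: (ceq_span Hg Hkl Hjk).
  + have Hg : gceq (PP D0 D1 lam) (QQ D0 D1 lam) k
       (fun t => row_mx (0 : 'M_(q2, q1)) (1%:M : 'M_q2) *m x t).
      by apply: (gceq_map (S := row_mx 0 1%:M)) Hc; msimp.
    exact: (ceq_span Hg Hkl Hjk).
Qed.

Lemma part2 (F : fieldType) (lam : option F) (p q1 q2 : nat) (C0 C1 : 'M[F]_(p, q1)) (i : nat) :
      (1 <= i)%N ->
      dimL (row_mx C0 (0 : 'M[F]_(p, q2))) (row_mx C1 (0 : 'M[F]_(p, q2))) lam i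
      = (dimL C0 C1 lam i + q2)%N.
Proof.
move=> Hi.
have EP : PP (row_mx C0 (0 : 'M[F]_(p, q2))) (row_mx C1 0) lam = row_mx (PP C0 C1 lam) 0.
  by case: (lam) => [a|] //=; rewrite scale_row_mx add_row_mx !scaler0 !addr0.
have EQ : QQ (row_mx C0 (0 : 'M[F]_(p, q2))) (row_mx C1 0) lam = row_mx (QQ C0 C1 lam) 0.
  by case: (lam).
rewrite (dim_by_sub (N := block_mx (L_mx C0 C1 lam i) 0 0 (1%:M : 'M_q2))).
- by rewrite rank_diag_block_mx mxrank1.
- rewrite block_mxEv col_mx_sub; apply/andP; split.
  + have -> : row_mx (L_mx C0 C1 lam i) (0 : 'M_(q1, q2))
       = L_mx C0 C1 lam i *m (col_mx 1%:M (0 : 'M_(q2, q1)))^T.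
      by rewrite tr_col_mx trmx1 trmx0 mul_mx_row mulmx1 mulmx0.
    apply: rowmapT => j; apply: span_map; first by apply/L_rep; rewrite trmxK; exact: row_sub.
    move=> u Hu; apply: span_sub; rewrite EP EQ.
    apply: (cv_map (S := 1%:M)) Hu; [by msimp | by msimp | exact: colinj].
  + have -> : row_mx (0 : 'M_(q2, q1)) (1%:M : 'M_q2)
       = (1%:M : 'M[F]_q2) *m (col_mx (0 : 'M_(q1, q2)) 1%:M)^T.
      by rewrite tr_col_mx trmx1 trmx0 mul1mx.
    apply: rowmapT => j.
    case Hu: (col_mx (0 : 'M_(q1, q2)) 1%:M *m (row j (1%:M : 'M[F]_q2))^T == 0).
      by rewrite (eqP Hu); exact: span0.
    apply: span_sub; rewrite EP EQ.
    exists 0%N, (fun _ => col_mx (0 : 'M_(q1, q2)) 1%:M *m (row j (1%:M : 'M[F]_q2))^T), 0%N.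
    split => //; split; last by [].
    split; first by rewrite Hu.
    split; first by rewrite mulmxA; msimp.
    by move=> t Ht; exfalso; move: Ht; lia.
- move=> v [k [x [j [Hkl [[_ Hc] [Hjk ->]]]]]]; rewrite EP EQ in Hc.
  apply: blk_sub; last exact: submx1.
  apply/L_rep.
  have Hg : gceq (PP C0 C1 lam) (QQ C0 C1 lam) k
       (fun t => row_mx (1%:M : 'M_q1) (0 : 'M_(q1, q2)) *m x t).
    by apply: (gceq_map (S := 1%:M)) Hc; msimp.
  exact: (ceq_span Hg Hkl Hjk).
Qed.

Lemma part3 (F : fieldType) (lam : option F) (p1 p2 q : nat) (C0 C1 : 'M[F]_(p1, q)) (i : nat) :
      dimL (col_mx C0 (0 : 'M[F]_(p2, q))) (col_mx C1 (0 : 'M[F]_(p2, q))) lam i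
      = dimL C0 C1 lam i.
Proof.
have EP : PP (col_mx C0 (0 : 'M[F]_(p2, q))) (col_mx C1 0) lam = col_mx (PP C0 C1 lam) 0.
  by case: (lam) => [a|] //=; rewrite scale_col_mx add_col_mx !scaler0 !addr0.
have EQ : QQ (col_mx C0 (0 : 'M[F]_(p2, q))) (col_mx C1 0) lam = col_mx (QQ C0 C1 lam) 0.
  by case: (lam).
rewrite {2}/dimL; apply: dim_rep => v; rewrite L_rep; apply: span_ext => u; rewrite EP EQ.
split => H; rewrite -(mul1mx u).
  by apply: (cv_map (S := col_mx 1%:M 0)) H; [msimp | msimp | move=> w; rewrite mul1mx].
by apply: (cv_map (S := row_mx 1%:M 0)) H; [msimp | msimp | move=> w; rewrite mul1mx].
Qed.

Theorem proposition3p6 (F : closedFieldType) (lam : option F) :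
  (* (1) block diagonal *)
  (forall (p1 q1 p2 q2 : nat) (C0 C1 : 'M[F]_(p1, q1)) (D0 D1 : 'M[F]_(p2, q2))
          (i : nat),
      dimL (block_mx C0 0 0 D0) (block_mx C1 0 0 D1) lam i
      = (dimL C0 C1 lam i + dimL D0 D1 lam i)%N) /\
  (* (2) [C 0] *)
  (forall (p q1 q2 : nat) (C0 C1 : 'M[F]_(p, q1)) (i : nat),
      (1 <= i)%N ->
      dimL (row_mx C0 (0 : 'M[F]_(p, q2))) (row_mx C1 (0 : 'M[F]_(p, q2))) lam i
      = (dimL C0 C1 lam i + q2)%N) /\
  (* (3) [C; 0] *)
  (forall (p1 p2 q : nat) (C0 C1 : 'M[F]_(p1, q)) (i : nat),
      dimL (col_mx C0 (0 : 'M[F]_(p2, q))) (col_mx C1 (0 : 'M[F]_(p2, q))) lam i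
      = dimL C0 C1 lam i).
Proof.
split; first exact: part1.
split; first exact: part2.
exact: part3.
Qed.
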